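(* Let $k$ be a field, $X=\mathbb P^{n_1}_k\times\cdots\times\mathbb P^{n_s}_k$ with $\mathbb Z^s$-graded coordinate ring $R=k[x_{i,j}: 1\le i\le s,\ 0\le j\le n_i]$ and irrelevant ideal $B=B_1\cdots B_s$, $B_i=(x_{i,0},\ldots,x_{i,n_i})$. Let $A=k[T_1,\ldots,T_r]$, $S=R[T_1,\ldots,T_r]$ graded by $\mathbb Z^s\times\mathbb Z$ (with $\deg T_i=(0,1)$), let $J\subseteq S$ be an ideal generated by finitely many homogeneous elements, $\mathcal S=S/J$, and let $\mathfrak A(J):=(J:B^\infty)\cap A$. For $\nu\in\mathbb Z^s$ write $\mathcal S_\nu=\bigoplus_{t}\mathcal S_{(\nu,t)}$, a finitely generated graded $A$-module. If $\nu\in\mathbb N^s$ satisfies $H^0_B(\mathcal S)_\nu=0$, then $\mathfrak A(J)=\mathrm{ann}_A(\mathcal S_\nu)$, and there exists an integer $n_\nu$ such that $$\mathfrak A(J)^{n_\nu}\subseteq \mathrm{Fitt}^0_A(\mathcal S_\nu)\subseteq\mathfrak A(J).$$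
   Context: $\mathrm{Fitt}^0_A(M)$ is the initial Fitting ideal of a finitely presented $A$-module $M$ (ideal of maximal minors of a presentation matrix). $\mathfrak A(J)$ defines the image $\pi_2(\Gamma)$ of the subscheme $\Gamma\subseteq X\times\mathbb P^{r-1}_k$ defined by $J$ under the second projection. *)

(* Defs.v *)
From HB Require Import structures.
From mathcomp Require Import all_boot all_order all_algebra.
From mathcomp Require Import mpoly.
Set Implicit Arguments. Unset Strict Implicit. Unset Printing Implicit Defensive.
Import Order.TTheory GRing.Theory.
Local Open Scope ring_scope.

Section Ideals.
Variable R : comRingType.

Definition ideal_span (G : R -> Prop) : R -> Prop :=
  fun f => exists l : seq (R * R),
    (forall p, p \in l -> G p.2) /\ f = \sum_(p <- l) p.1 * p.2.

Definition unit_ideal : R -> Prop := ideal_span (fun x => x = 1).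

Definition ideal_mul (I J : R -> Prop) : R -> Prop :=
  ideal_span (fun h => exists a b, I a /\ J b /\ h = a * b).

Definition ideal_pow (I : R -> Prop) (m : nat) : R -> Prop :=
  iter m (ideal_mul I) unit_ideal.

Definition saturation (J B : R -> Prop) : R -> Prop :=
  fun f => exists m, forall g, ideal_pow B m g -> J (f * g).
End Ideals.

(* Variables of S = R[T_1..T_r] are indexed by 'I_(nx + r):
   lshift r v (v : 'I_nx) is an x-variable lying in block blk v,
   rshift nx t (t : 'I_r) is the variable T_(t+1). *)
Section Setting.
Variables (k : fieldType) (s nx r : nat) (blk : 'I_nx -> 'I_s).

Definition Sring := {mpoly k[nx + r]}.
Definition Aring := {mpoly k[r]}.

Definition iotaA (a : Aring) : Sring :=
  mmap (fun c => c%:MP) (fun t => 'X_(rshift nx t)) a.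

Definition blockdeg (m : 'X_{1..nx + r}) (i : 'I_s) : nat :=
  (\sum_(v < nx | blk v == i) m (lshift r v))%N.
Definition Tdeg (m : 'X_{1..nx + r}) : nat :=
  (\sum_(t < r) m (rshift nx t))%N.

Definition homogeneous (f : Sring) : Prop :=
  exists (d : 'I_s -> nat) (e : nat), forall m, m \in msupp f ->
    (forall i, blockdeg m i = d i) /\ Tdeg m = e.

Definition in_deg (nu : 'I_s -> nat) (f : Sring) : Prop :=
  forall m, m \in msupp f -> forall i, blockdeg m i = nu i.

Definition Bi (i : 'I_s) : Sring -> Prop :=
  ideal_span (fun f : Sring => exists v, blk v = i /\ f = 'X_(lshift r v)).
Definition Birr : Sring -> Prop :=
  foldr (fun i I => ideal_mul (Bi i) I) (@unit_ideal _) (enum 'I_s).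

Definition frakA (J : Sring -> Prop) : Aring -> Prop :=
  fun a => saturation J Birr (iotaA a).

(* H^0_B(S/J)_nu = 0 : every element of (S/J)_nu killed by a power of B is 0 *)
Definition H0B_deg_zero (J : Sring -> Prop) (nu : 'I_s -> nat) : Prop :=
  forall f, in_deg nu f -> saturation J Birr f -> J f.

Definition annA (J : Sring -> Prop) (nu : 'I_s -> nat) : Aring -> Prop :=
  fun a => forall f, in_deg nu f -> J (iotaA a * f).

(* A finite presentation of the A-module (S/J)_nu:
   generators g : 'I_p -> S_nu (images mod J), relation matrix Phi whose
   q columns generate the kernel of A^p -> (S/J)_nu. *)
Definition presentation (J : Sring -> Prop) (nu : 'I_s -> nat)
    (p q : nat) (g : 'I_p -> Sring) (Phi : 'M[Aring]_(p, q)) : Prop :=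
  [/\ forall j, in_deg nu (g j),
      forall f, in_deg nu f ->
        exists a : 'I_p -> Aring, J (f - \sum_(j < p) iotaA (a j) * g j)
    & forall a : 'I_p -> Aring,
        J (\sum_(j < p) iotaA (a j) * g j) <->
        exists c : 'I_q -> Aring, forall j, a j = \sum_(l < q) Phi j l * c l].
End Setting.

(* Fitt^0 computed from a presentation matrix: ideal of maximal (p x p) minors *)
Definition Fitt0_of (R : comRingType) (p q : nat) (Phi : 'M[R]_(p, q)) : R -> Prop :=
  ideal_span (fun x => exists f : 'I_p -> 'I_q, injective f /\ x = \det (colsub f Phi)).

(* Main.v *)
Require Import Defs.
From HB Require Import structures.
From mathcomp Require Import all_boot all_order all_algebra.
From mathcomp Require Import mpoly.
From mathcomp Require Import ring.
From Stdlib Require Import Classical.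
Set Implicit Arguments. Unset Strict Implicit. Unset Printing Implicit Defensive.
Import GRing.Theory.
Local Open Scope ring_scope.

Section IdealGen.
Variable R : comRingType.
Definition is_ideal (I : R -> Prop) :=
  [/\ I 0, (forall x y, I x -> I y -> I (x + y)) & (forall c x, I x -> I (c * x))].

Lemma span_ideal (G : R -> Prop) : is_ideal (ideal_span G).
Proof.
split.
- by exists [::]; split => //; rewrite big_nil.
- move=> x y [l1 [H1 ->]] [l2 [H2 ->]]; exists (l1 ++ l2); split.
    by move=> q; rewrite mem_cat => /orP [/H1|/H2].
  by rewrite big_cat.
- move=> c x [l [H ->]]; exists [seq (c * q.1, q.2) | q <- l]; split.
    by move=> q /mapP [q' /H Hq ->].
  by rewrite big_map big_distrr; apply: eq_bigr => q _ /=; rewrite mulrA.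
Qed.

Lemma span_gen (G : R -> Prop) x : G x -> ideal_span G x.
Proof.
move=> Gx; exists [:: (1, x)]; split; last by rewrite big_seq1 mul1r.
by move=> q; rewrite inE => /eqP ->.
Qed.

Lemma span_min (G I : R -> Prop) : is_ideal I -> (forall x, G x -> I x) ->
  forall f, ideal_span G f -> I f.
Proof.
move=> [I0 ID IM] GI f [l [Hl ->]]; elim: l Hl => [|q l IH] Hl.
  by rewrite big_nil.
rewrite big_cons; apply: ID; last by apply: IH => q' Hq'; apply: Hl; rewrite inE Hq' orbT.
by apply: IM; apply: GI; apply: Hl; rewrite inE eqxx.
Qed.

Lemma ideal_sum (I : R -> Prop) (T : eqType) (r : seq T) (F : T -> R) :
  is_ideal I -> (forall t, t \in r -> I (F t)) -> I (\sum_(t <- r) F t).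
Proof.
move=> [I0 ID IM]; elim: r => [|t r IH] H; first by rewrite big_nil.
rewrite big_cons; apply: ID; first by apply: H; rewrite inE eqxx.
by apply: IH => u Hu; apply: H; rewrite inE Hu orbT.
Qed.

Lemma ideal_mono (I I' : R -> Prop) : (forall x, I x -> I' x) ->
  forall m x, ideal_pow I m x -> ideal_pow I' m x.
Proof.
move=> II' m; elim: m => [//|m IH] x /=.
apply: span_min; first exact: span_ideal.
move=> h [a [b [Ia [Jb ->]]]]; apply: span_gen; exists a, b; split; auto.
Qed.
End IdealGen.
Section Grading.
Variables (k : fieldType) (s nx r : nat) (blk : 'I_nx -> 'I_s).
Local Notation S := (Sring k nx r).
Local Notation A := (Aring k r).
Local Notation bd := (@blockdeg s nx r blk).
Local Notation ind := (@in_deg k s nx r blk).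
Local Notation ioA := (@iotaA k nx r).

Definition geq (d : 'I_s -> nat) (f : S) : Prop :=
  forall m, m \in msupp f -> forall i, (d i <= bd m i)%N.

Lemma blockdegD m1 m2 i : bd (m1 + m2)%MM i = (bd m1 i + bd m2 i)%N.
Proof. by rewrite /blockdeg -big_split /=; apply: eq_bigr => v _; rewrite mnmDE. Qed.

Lemma blockdeg0 i : bd 0%MM i = 0%N.
Proof. by rewrite /blockdeg big1 // => v _; rewrite mnm0E. Qed.

Lemma in_deg_ideal0 d : ind d 0.
Proof. by move=> m; rewrite msupp0. Qed.

Lemma in_degD d f g : ind d f -> ind d g -> ind d (f + g).
Proof.
move=> Hf Hg m /msuppD_le; rewrite mem_cat => /orP [/Hf|/Hg] //.
Qed.

Lemma in_deg_sum d (T : eqType) (l : seq T) (F : T -> S) :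
  (forall t, ind d (F t)) -> ind d (\sum_(t <- l) F t).
Proof.
move=> H; elim: l => [|t l IH]; first by rewrite big_nil; apply: in_deg_ideal0.
by rewrite big_cons; apply: in_degD.
Qed.

Lemma in_degM d e f g : ind d f -> ind e g ->
  ind (fun i => d i + e i)%N (f * g).
Proof.
move=> Hf Hg m /msuppM_le /allpairsP [[m1 m2] [/= H1 H2 ->]] i.
by rewrite blockdegD Hf // Hg.
Qed.

Lemma in_deg_ext d e f : (forall i, d i = e i) -> ind d f -> ind e f.
Proof. by move=> de H m Hm i; rewrite -de H. Qed.

Lemma in_degM0 d f g : ind (fun _ => 0%N) f -> ind d g -> ind d (f * g).
Proof.
move=> Hf Hg m /msuppM_le /allpairsP [[m1 m2] [/= H1 H2 ->]] i.
by rewrite blockdegD Hf // Hg.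
Qed.

Lemma in_degC c : ind (fun _ => 0%N) c%:MP.
Proof.
move=> m; rewrite msuppC; case: eqP => _ //; rewrite inE => /eqP -> i.
exact: blockdeg0.
Qed.

Lemma in_deg1 : ind (fun _ => 0%N) 1.
Proof. by rewrite -mpolyC1; apply: in_degC. Qed.

Lemma in_deg_prod (T : eqType) (l : seq T) (F : T -> S) :
  (forall t, ind (fun _ => 0%N) (F t)) -> ind (fun _ => 0%N) (\prod_(t <- l) F t).
Proof.
move=> H; elim: l => [|t l IH]; first by rewrite big_nil; apply: in_deg1.
by rewrite big_cons; apply: in_degM0.
Qed.

Lemma in_degX0 f n : ind (fun _ => 0%N) f -> ind (fun _ => 0%N) (f ^+ n).
Proof.
move=> H; elim: n => [|n IH]; first by rewrite expr0; apply: in_deg1.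
by rewrite exprS; apply: in_degM0.
Qed.

Lemma in_degXT t : ind (fun _ => 0%N) ('X_(rshift nx t) : S).
Proof.
move=> m; rewrite msuppX inE => /eqP -> i.
rewrite /blockdeg big1 // => v _; rewrite mnm1E.
apply/eqP; rewrite eqb0; apply/eqP => /(congr1 val) /= E.
by move: (ltn_ord v); rewrite -E ltnNge leq_addr.
Qed.

Lemma iotaA_deg0 (a : A) : ind (fun _ => 0%N) (ioA a).
Proof.
rewrite /iotaA /mmap; apply: in_deg_sum => m.
apply: in_degM0; first exact: in_degC.
rewrite /mmap1; apply: in_deg_prod => t; apply: in_degX0; apply: in_degXT.
Qed.

Lemma in_deg_iotaAM d (a : A) f : ind d f -> ind d (ioA a * f).
Proof. move=> H; exact: (in_degM0 (@iotaA_deg0 a) H). Qed.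

Lemma iotaA_morph : ioA =1 mmap (@mpolyC (nx + r) k) (fun t => 'X_(rshift nx t)).
Proof. by []. Qed.

Lemma iotaAM (a b : A) : ioA (a * b) = ioA a * ioA b.
Proof. by rewrite !iotaA_morph rmorphM. Qed.
Lemma iotaAD (a b : A) : ioA (a + b) = ioA a + ioA b.
Proof. by rewrite !iotaA_morph rmorphD. Qed.
Lemma iotaA0 : ioA 0 = 0.
Proof. by rewrite !iotaA_morph rmorph0. Qed.
Lemma iotaA1 : ioA 1 = 1.
Proof. by rewrite !iotaA_morph rmorph1. Qed.
Lemma iotaA_sum (T : Type) (l : seq T) (F : T -> A) :
  ioA (\sum_(t <- l) F t) = \sum_(t <- l) ioA (F t).
Proof. by rewrite !iotaA_morph rmorph_sum. Qed.

Lemma geq_ideal d : is_ideal (geq d).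
Proof.
split.
- by move=> m; rewrite msupp0.
- move=> f g Hf Hg m /msuppD_le; rewrite mem_cat => /orP [/Hf|/Hg] //.
- move=> c f Hf m /msuppM_le /allpairsP [[m1 m2] [/= H1 H2 ->]] i.
  by rewrite blockdegD (leq_trans (Hf _ H2 i)) // leq_addl.
Qed.

Lemma geqM d e f g : geq d f -> geq e g -> geq (fun i => d i + e i)%N (f * g).
Proof.
move=> Hf Hg m /msuppM_le /allpairsP [[m1 m2] [/= H1 H2 ->]] i.
by rewrite blockdegD leq_add // ?Hf ?Hg.
Qed.

Lemma geq_weak d e f : (forall i, d i <= e i)%N -> geq e f -> geq d f.
Proof. by move=> de H m Hm i; apply: leq_trans (de i) (H m Hm i). Qed.

Lemma bdU v j : bd U_(lshift r v)%MM j = (blk v == j).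
Proof.
rewrite /blockdeg; case: eqP => [<-|ne].
  rewrite (bigD1 v) //= mnm1E eqxx big1 // => w /andP [_ wv].
  by rewrite mnm1E; apply/eqP; rewrite eqb0; apply: contra wv => /eqP /lshift_inj ->.
rewrite big1 // => w /eqP bw; rewrite mnm1E; apply/eqP; rewrite eqb0.
by apply/eqP => /lshift_inj E; apply: ne; rewrite E.
Qed.

Lemma Bi_geq i f : Bi blk i f -> geq (fun j => nat_of_bool (i == j)) f.
Proof.
apply: span_min; first exact: geq_ideal.
move=> x [v [<- ->]] m; rewrite msuppX inE => /eqP -> j.
by rewrite bdU.
Qed.

Lemma foldr_geq (l : seq 'I_s) f :
  foldr (fun i I => ideal_mul (Bi blk i) I) (@unit_ideal _) l f ->
  geq (fun j => count_mem j l) f.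
Proof.
elim: l f => [|i l IH] f /=.
  by move=> _ m _ j.
apply: span_min; first exact: geq_ideal.
move=> x [a [b [Ha [Hb ->]]]].
exact: geqM (Bi_geq Ha) (IH _ Hb).
Qed.

Lemma Birr_geq f : Birr blk f -> geq (fun _ => 1%N) f.
Proof.
move=> /foldr_geq H; apply: geq_weak H => j.
by rewrite count_uniq_mem ?enum_uniq // mem_enum.
Qed.

Lemma pow_geq m f : ideal_pow (Birr blk) m f -> geq (fun _ => m) f.
Proof.
elim: m f => [|m IH] f /=.
  by move=> _ x _ j.
apply: span_min; first exact: geq_ideal.
move=> x [a [b [Ha [Hb ->]]]].
exact: geqM (Birr_geq Ha) (IH _ Hb).
Qed.

Lemma decomp n : forall (d : 'I_s -> nat) (m : 'X_{1..nx + r}),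
  (\sum_i d i)%N = n -> (forall i, d i <= bd m i)%N ->
  exists b c, m = (b + c)%MM /\ forall i, bd b i = d i.
Proof.
elim: n => [|n IH] d m Hs Hd.
  exists 0%MM, m; split; first by rewrite add0m.
  move=> i; rewrite blockdeg0; apply/esym/eqP.
  by move/eqP: Hs; rewrite sum_nat_eq0 => /forallP /(_ i) /implyP; apply.
case: (pickP (fun i => 0 < d i)%N) => [i Hi|H0]; last first.
  by move: Hs; rewrite big1 // => i _; move: (H0 i) => /= /negbT; rewrite lt0n negbK => /eqP.
case: (pickP (fun v => (blk v == i) && (0 < m (lshift r v)))%N) => [v /andP [/eqP bv mv]|H0]; last first.
  have : bd m i = 0%N.
    rewrite /blockdeg big1 // => v bv; move: (H0 v); rewrite bv /= => /negbT.
    by rewrite lt0n negbK => /eqP.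
  by move=> E; move: (Hd i) Hi; rewrite E leqn0 => /eqP ->.
pose u := U_(lshift r v)%MM.
have Hm : m = ((m - u) + u)%MM.
  rewrite submK //; apply/mnm_lepP => w; rewrite /u mnm1E.
  by case: eqP => [<-|]; rewrite ?mv.
pose d' := fun j => (d j - (i == j))%N.
have Hdd j : d j = (d' j + (i == j))%N.
  by rewrite /d'; case: eqP => [<-|_]; rewrite ?subn0 ?addn0 ?subnK.
have Hs' : (\sum_j d' j)%N = n.
  move: Hs; rewrite (eq_bigr (fun j => d' j + (i == j))%N) // big_split /=.
  have E1 : (\sum_j nat_of_bool (i == j))%N = 1%N.
    rewrite (bigD1 i) //= eqxx big1 ?addn0 // => j ji.
    by rewrite eq_sym (negbTE ji).
  by rewrite E1 addn1 => -[].
have Hd' j : (d' j <= bd (m - u)%MM j)%N.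
  move: (Hd j); rewrite {1}Hm blockdegD /u bdU bv Hdd.
  by case: (i == j); rewrite ?addn0 ?addn1 ?ltnS.
have [b [c [Hbc Hb]]] := IH d' (m - u)%MM Hs' Hd'.
exists (b + u)%MM, c; split.
  by rewrite Hm Hbc -addmA [(c + u)%MM]addmC addmA.
by move=> j; rewrite blockdegD /u bdU bv Hb Hdd.
Qed.
End Grading.
Section Part1Thm.
Variables (k : fieldType) (s nx r : nat) (blk : 'I_nx -> 'I_s).
Local Notation S := (Sring k nx r).
Local Notation A := (Aring k r).
Local Notation bd := (@blockdeg s nx r blk).
Local Notation ind := (@in_deg k s nx r blk).
Local Notation ioA := (@iotaA k nx r).
Variables (J : S -> Prop) (HJ : is_ideal J) (nu : 'I_s -> nat).

Lemma frakA_annA (H0B : H0B_deg_zero blk J nu) a : frakA blk J a -> annA blk J nu a.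
Proof.
move=> [M HM] f Hf; apply: H0B; first exact: in_deg_iotaAM.
exists M => g Hg; case: HJ => _ _ HM'.
have -> : ioA a * f * g = f * (ioA a * g) by ring.
by apply: HM'; apply: HM.
Qed.

Lemma annA_frakA a : annA blk J nu a -> frakA blk J a.
Proof.
move=> Ha; exists (\sum_i nu i)%N => g /pow_geq Hg.
have Hg' : forall m, m \in msupp g -> forall i, (nu i <= bd m i)%N.
  apply: (geq_weak _ Hg) => i; rewrite (bigD1 i) //= leq_addr //.
rewrite [g]mpolyE big_distrr /=; apply: ideal_sum => // m Hm.
have [b [c [-> Hb]]] := decomp (erefl _) (Hg' m Hm).
rewrite mpolyXD -mul_mpolyC.
have -> : ioA a * ((g@_(b + c)%MM)%:MP * ('X_[b] * 'X_[c])) =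
   ((g@_(b + c)%MM)%:MP * 'X_[c]) * (ioA a * 'X_[b]) by ring.
case: HJ => _ _ HM; apply: HM; apply: Ha.
by move=> m'; rewrite msuppX inE => /eqP -> i; rewrite Hb.
Qed.
End Part1Thm.
Section RepDet.
Variables (R : comRingType) (p : nat).
Definition rep (M : 'M[R]_p) (i0 : 'I_p) (v : 'I_p -> R) : 'M[R]_p :=
  \matrix_(i, j) if i == i0 then v j else M i j.

Lemma rep_ext M i0 v w : v =1 w -> rep M i0 v = rep M i0 w.
Proof. by move=> vw; apply/matrixP => i j; rewrite !mxE vw. Qed.

Lemma rep_id M i0 : rep M i0 (fun j => M i0 j) = M.
Proof. by apply/matrixP => i j; rewrite !mxE; case: eqP => [->|]. Qed.

Lemma det_rep_lin M i0 b v c w :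
  \det (rep M i0 (fun j => b * v j + c * w j)) =
  b * \det (rep M i0 v) + c * \det (rep M i0 w).
Proof.
apply: (@determinant_multilinear _ _ _ _ _ i0).
- by apply/rowP => j; rewrite !mxE eqxx.
- by apply/matrixP => i j; rewrite !mxE eq_sym (negbTE (neq_lift i0 i)).
- by apply/matrixP => i j; rewrite !mxE eq_sym (negbTE (neq_lift i0 i)).
Qed.

Lemma det_rep_sum (T : Type) (l : seq T) (c : T -> R) (V : T -> 'I_p -> R) M i0 :
  \det (rep M i0 (fun j => \sum_(t <- l) c t * V t j)) =
  \sum_(t <- l) c t * \det (rep M i0 (V t)).
Proof.
elim: l => [|t l IH].
  rewrite big_nil (@rep_ext _ _ _ (fun j => 0 * 0 + 0 * 0)); last by move=> j; rewrite big_nil mul0r addr0.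
  by rewrite det_rep_lin !mul0r addr0.
rewrite big_cons (@rep_ext _ _ _ (fun j => c t * V t j + 1 * \sum_(t <- l) c t * V t j)); last first.
  by move=> j; rewrite big_cons mul1r.
by rewrite det_rep_lin IH mul1r.
Qed.
End RepDet.

Lemma ideal_premul (R : comRingType) (I : R -> Prop) y :
  is_ideal I -> is_ideal (fun b => I (b * y)).
Proof.
move=> [I0 ID IM]; split.
- by rewrite mul0r.
- by move=> a b Ha Hb; rewrite mulrDl; apply: ID.
- by move=> c a Ha; rewrite -mulrA; apply: IM.
Qed.

Section Fitting.
Variables (k : fieldType) (s nx r : nat) (blk : 'I_nx -> 'I_s).
Local Notation S := (Sring k nx r).
Local Notation A := (Aring k r).
Local Notation ind := (@in_deg k s nx r blk).
Local Notation ioA := (@iotaA k nx r).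
Variables (J : S -> Prop) (HJ : is_ideal J) (nu : 'I_s -> nat).
Variables (p q : nat) (g : 'I_p -> S) (Phi : 'M[A]_(p, q)).
Hypothesis (Hpres : presentation blk J nu g Phi).

Local Notation ann := (annA blk J nu).

Lemma ann_ideal : is_ideal ann.
Proof.
case: HJ => J0 JD JM; split.
- by move=> f _; rewrite iotaA0 mul0r.
- by move=> x y Hx Hy f Hf; rewrite iotaAD mulrDl; apply: JD; [apply: Hx|apply: Hy].
- by move=> c x Hx f Hf; rewrite iotaAM -mulrA; apply: JM; apply: Hx.
Qed.

Lemma Fitt_ann x : Fitt0_of Phi x -> ann x.
Proof.
case: Hpres => Hg Hgen Hrel.
apply: span_min; first exact: ann_ideal.
move=> y [f [_ ->]]; set M := colsub f Phi.
have Hj j : J (ioA (\det M) * g j).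
  have E : \sum_(l < p) ioA (\det M *+ (l == j)) * g l = ioA (\det M) * g j.
    rewrite (bigD1 j) //= eqxx mulr1n big1 ?addr0 // => l /negbTE ->.
    by rewrite mulr0n iotaA0 mul0r.
  rewrite -E; apply/(Hrel (fun l => \det M *+ (l == j))).
  exists (fun l' => \sum_(k0 < p | f k0 == l') \adj M k0 j) => l.
  have := congr1 (fun N : 'M[A]_p => N l j) (mul_mx_adj M); rewrite !mxE /= => <-.
  rewrite (partition_big f predT) //=; apply: eq_bigr => l' _.
  rewrite big_distrr /=; apply: eq_bigr => k0 /eqP <-.
  by rewrite mxE.
move=> F HF; have [b Hb] := Hgen F HF.
have -> : ioA (\det M) * F = ioA (\det M) * (F - \sum_(j < p) ioA (b j) * g j) +
   \sum_(j < p) ioA (b j) * (ioA (\det M) * g j).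
  have -> : \sum_(j < p) ioA (b j) * (ioA (\det M) * g j) =
            ioA (\det M) * \sum_(j < p) ioA (b j) * g j.
    by rewrite big_distrr; apply: eq_bigr => j _; rewrite mulrCA.
  by rewrite -mulrDr subrK.
case: HJ => J0 JD JM; apply: JD; first by apply: JM.
by apply: ideal_sum => // j _; apply: JM.
Qed.

Lemma rel_scale a (w : 'I_p -> A) : ann a ->
  J (\sum_(j < p) ioA (a * w j) * g j).
Proof.
case: Hpres => Hg _ _ Ha.
have -> : \sum_(j < p) ioA (a * w j) * g j = ioA a * \sum_(j < p) ioA (w j) * g j.
  by rewrite big_distrr; apply: eq_bigr => j _; rewrite iotaAM /= mulrA.
apply: Ha; apply: in_deg_sum => j; apply: in_deg_iotaAM; apply: Hg.
Qed.

Lemma Fitt_ideal : is_ideal (Fitt0_of Phi).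
Proof. exact: span_ideal. Qed.

Lemma Qlem m : (m <= p)%N -> forall b, ideal_pow ann m b ->
  forall M : 'M[A]_p, (forall j : 'I_p, (m <= j)%N -> exists l : 'I_q, forall i, M j i = Phi i l) ->
  Fitt0_of Phi (b * \det M).
Proof.
case: Hpres => Hg Hgen Hrel.
elim: m => [|m IH] Hm b Hb M HM.
  case: Fitt_ideal => F0 FD FM; apply: FM.
  have [f Hf] := fin_all_exists (fun j => HM j (leq0n _)).
  have -> : M = (colsub f Phi)^T by apply/matrixP => j i; rewrite !mxE Hf.
  case: (classic (injective f)) => [inj|ninj].
    by rewrite det_tr; apply: span_gen; exists f.
  have [j1 /not_all_ex_not [j2 Hj]] := not_all_ex_not _ _ ninj.
  have [E ne] : f j1 = f j2 /\ j1 <> j2 by tauto.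
  rewrite (@determinant_alternate _ _ _ j1 j2) //; first by apply/eqP.
  by move=> i; rewrite !mxE E.
have mp : (m < p)%N by [].
pose jm := Ordinal mp.
move: b Hb; apply: (span_min (@ideal_premul _ _ (\det M) Fitt_ideal)).
move=> h [a [b' [Ha [Hb' ->]]]].
have [c Hc] := (Hrel (fun i => a * M jm i)).1 (rel_scale (fun i => M jm i) Ha).
have -> : a * b' * \det M = b' * (a * \det M) by ring.
have -> : a * \det M = \sum_(l < q) c l * \det (rep M jm (fun i => Phi i l)).
  have E := det_rep_lin M jm a (fun i => M jm i) 0 (fun i => M jm i).
  rewrite rep_id mul0r addr0 in E.
  rewrite -E -det_rep_sum.
  congr (\det _); apply: rep_ext => i; rewrite mul0r addr0 Hc.
  by apply: eq_bigr => l _; rewrite mulrC.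
rewrite big_distrr /=; apply: ideal_sum; first exact: Fitt_ideal.
move=> l _; rewrite mulrCA; case: Fitt_ideal => _ _ FM; apply: FM.
apply: IH; [exact: ltnW | exact: Hb' |].
move=> j Hjm; case: (eqVneq j jm) => [->|ne].
  by exists l => i; rewrite mxE eqxx.
have [l' Hl'] : exists l : 'I_q, forall i, M j i = Phi i l.
  apply: HM; rewrite ltn_neqAle Hjm andbT; apply: contra ne => /eqP E.
  by apply/eqP; apply: val_inj.
by exists l' => i; rewrite mxE (negbTE ne).
Qed.

Lemma pow_Fitt b : ideal_pow ann p b -> Fitt0_of Phi b.
Proof.
move=> Hb; rewrite -[b]mulr1 -(det1 _ p).
apply: Qlem (leqnn _) _ Hb _ _ => j Hj.
by move: (ltn_ord j); rewrite ltnNge Hj.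
Qed.
End Fitting.

Theorem mainTheorem3 (k : fieldType) (s nx r : nat) (blk : 'I_nx -> 'I_s)
  (blk_nonempty : forall i : 'I_s, exists v, blk v = i)
  (gens : seq (Sring k nx r))
  (gens_hom : forall f, f \in gens -> homogeneous blk f)
  (nu : 'I_s -> nat) :
  let J := ideal_span (fun f => f \in gens) in
  H0B_deg_zero blk J nu ->
  (forall a, frakA blk J a <-> annA blk J nu a) /\
  (forall (p q : nat) (g : 'I_p -> Sring k nx r) (Phi : 'M[Aring k r]_(p, q)),
     presentation blk J nu g Phi ->
     exists n : nat,
       (forall a, ideal_pow (frakA blk J) n a -> Fitt0_of Phi a) /\
       (forall a, Fitt0_of Phi a -> frakA blk J a)).
Proof.
move=> J H0B.
have HJ : is_ideal J by apply: span_ideal.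
split.
  move=> a; split; [exact: (frakA_annA HJ H0B) | exact: (annA_frakA HJ)].
move=> p q g Phi Hp; exists p; split.
  move=> a Ha; apply: (pow_Fitt Hp).
  exact: (@ideal_mono _ (frakA blk J) (annA blk J nu) (@frakA_annA _ _ _ _ blk J HJ nu H0B) p a Ha).
by move=> a Ha; apply: (annA_frakA HJ); apply: (Fitt_ann HJ Hp).
Qed.
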